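(* Let $X$ be a normed space over $F\in\{\mathbb{R},\mathbb{C}\}$ with $\dim X\geq\kappa\geq\aleph_0$, let $Z$ be a linear subspace of $X$, $Cl(Z)$ its closure in $X$, and $e:Cl(Z)\hookrightarrow X$ the inclusion. If the induced quotient shape morphism $S_{\kappa^-}(e):Cl(Z)\to X$ is an isomorphism of $Sh_{\kappa^-}(\mathcal{N})$, then for every Banach space $Y$ over $F$ with $\dim Y<\kappa$, every continuous linear map $f:Z\to Y$ admits a continuous linear extension $\bar f:X\to Y$; moreover $\|\bar f\|=\|f\|$.
   Context: $\dim$ is algebraic (Hamel) dimension. $\mathcal{N}$ is the category of normed spaces over $F$ with continuous linear maps and $\mathcal{N}_{\kappa^-}$ its full subcategory of spaces of dimension $<\kappa$. An $\mathcal{N}_{\kappa^-}$-expansion of a normed space $X$ is a family $\boldsymbol{p}=(p_\lambda:X\to X_\lambda)_{\lambda\in\Lambda}$ of continuous linear maps into an inverse system $\boldsymbol{X}=(X_\lambda,p_{\lambda\lambda'},\Lambda)$ in $\mathcal{N}_{\kappa^-}$ over a directed set, with $p_{\lambda\lambda'}p_{\lambda'}=p_\lambda$, such that (E1) every continuous linear $h:X\to P$ with $P\in\mathcal{N}_{\kappa^-}$ factors as $h=gp_\lambda$, and (E2) $gp_\lambda=g'p_\lambda$ implies $gp_{\lambda\lambda'}=g'p_{\lambda\lambda'}$ for some $\lambda'\ge\lambda$. The quotient shape category $Sh_{\kappa^-}(\mathcal{N})$ has normed spaces as objects and as morphisms $X\to Y$ the pro-$\mathcal{N}_{\kappa^-}$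 morphisms between the systems of chosen expansions of $X$ and $Y$ (expansions of a space being canonically isomorphic). The shape functor sends a continuous linear $e:X\to Y$ to $S_{\kappa^-}(e)$, the class of the unique pro-morphism $\boldsymbol{e}$ with $\boldsymbol{e}\boldsymbol{p}=\boldsymbol{q}e$. *)

(* Defs.v *)
From mathcomp Require Import all_boot all_order all_algebra.
From mathcomp Require Import all_classical all_reals all_analysis.

Export numFieldNormedType.Exports.

Set Implicit Arguments.
Unset Strict Implicit.
Unset Printing Implicit Defensive.
Import Order.TTheory GRing.Theory Num.Theory.
Local Open Scope classical_set_scope.
Local Open Scope ring_scope.

Section LinearAlgebra.
Variable K : numFieldType.

Definition lin_subspace (V : lmodType K) (Z : set V) : Prop :=
  Z 0 /\ forall (a : K) x y, Z x -> Z y -> Z (a *: x + y).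

Definition linear_on (V W : lmodType K) (S : set V) (h : V -> W) : Prop :=
  forall (a : K) x y, S x -> S y -> h (a *: x + y) = a *: h x + h y.

Definition hamel_free (V : lmodType K) (B : set V) : Prop :=
  forall (s : seq V) (c : V -> K), uniq s -> (forall v, v \in s -> B v) ->
    \sum_(v <- s) c v *: v = 0 -> forall v, v \in s -> c v = 0.

Definition hamel_spans (V : lmodType K) (B : set V) : Prop :=
  forall x : V, exists (s : seq V) (c : V -> K),
    (forall v, v \in s -> B v) /\ x = \sum_(v <- s) c v *: v.

Definition hamel_basis (V : lmodType K) (B : set V) : Prop :=
  hamel_free B /\ hamel_spans B.

(** The cardinal kappa is represented by a set [k : set Tk].
    dim V < kappa, and dim V >= kappa (Hamel dimension). *)
Definition dim_lt (V : lmodType K) (Tk : Type) (k : set Tk) : Prop :=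
  exists B : set V, hamel_basis B /\ (B #<= k)%card /\ ~ (k #<= B)%card.

Definition dim_ge (V : lmodType K) (Tk : Type) (k : set Tk) : Prop :=
  exists B : set V, hamel_basis B /\ (k #<= B)%card.

End LinearAlgebra.

Section Shape.
Variable K : numFieldType.

(** continuous linear map defined on the linear subspace S of V
    (a normed space is represented as a linear subspace S of an ambient
     normed space V; for V itself take S = setT). *)
Definition is_clin (V W : normedModType K) (S : set V) (h : V -> W) : Prop :=
  linear_on S h /\ {within S, continuous h}.

Definition is_opnorm (V W : normedModType K) (S : set V) (f : V -> W) (c : K)
  : Prop :=
  0 <= c /\ (forall x, S x -> `|f x| <= c * `|x|) /\
  (forall c', 0 <= c' -> (forall x, S x -> `|f x| <= c' * `|x|) -> c <= c').

(** Inverse systems of normed spaces over a (pre)ordered index type.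
    The bonding maps are total functions; only their values for
    l <= l' matter. *)
Record invsys := InvSys {
  isx : Type;
  ile : isx -> isx -> Prop;
  ispace : isx -> normedModType K;
  ibond : forall l l' : isx, ispace l' -> ispace l
}.
Arguments ile : clear implicits.
Arguments ispace : clear implicits.
Arguments ibond {A} l l' _ : rename.

Definition inv_system (A : invsys) (Tk : Type) (k : set Tk) : Prop :=
  (forall l, ile A l l) /\
  (forall l l' l'', ile A l l' -> ile A l' l'' -> ile A l l'') /\
  (forall l l', exists l'', ile A l l'' /\ ile A l' l'') /\
  (forall l, dim_lt (ispace A l) k) /\
  (forall l l', ile A l l' -> is_clin setT (@ibond A l l')) /\
  (forall l (x : ispace A l), ibond l l x = x) /\
  (forall l l' l'', ile A l l' -> ile A l' l'' ->
     forall x : ispace A l'', ibond l l' (ibond l' l'' x) = ibond l l'' x).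

Record sysmor (A B : invsys) := SysMor {
  smap : isx B -> isx A;
  sfun : forall mu : isx B, ispace A (smap mu) -> ispace B mu
}.
Arguments smap {A B} _ _.
Arguments sfun {A B} _ _ _.

Definition is_sysmor (A B : invsys) (f : sysmor A B) : Prop :=
  (forall mu, is_clin setT (sfun f mu)) /\
  (forall mu mu', ile B mu mu' ->
     exists l, ile A (smap f mu) l /\ ile A (smap f mu') l /\
       forall x : ispace A l,
         sfun f mu (ibond (smap f mu) l x) =
         ibond mu mu' (sfun f mu' (ibond (smap f mu') l x))).

(** Equivalence of morphisms of systems (equality in pro-category). *)
Definition sys_equiv (A B : invsys) (f g : sysmor A B) : Prop :=
  forall mu, exists l, ile A (smap f mu) l /\ ile A (smap g mu) l /\
    forall x : ispace A l,
      sfun f mu (ibond (smap f mu) l x) = sfun g mu (ibond (smap g mu) l x).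

Definition sys_comp (A B C : invsys) (f : sysmor A B) (g : sysmor B C)
  : sysmor A C :=
  @SysMor A C (fun nu => smap f (smap g nu))
    (fun nu x => sfun g nu (sfun f (smap g nu) x)).

Definition sys_id (A : invsys) : sysmor A A :=
  @SysMor A A (fun l => l) (fun l x => x).

Definition pro_iso (A B : invsys) (f : sysmor A B) : Prop :=
  exists g : sysmor B A, is_sysmor g /\
    sys_equiv (sys_comp f g) (sys_id A) /\ sys_equiv (sys_comp g f) (sys_id B).

Definition expansion (V : normedModType K) (S : set V) (A : invsys)
  (p : forall l : isx A, V -> ispace A l) (Tk : Type) (k : set Tk) : Prop :=
  (forall l, is_clin S (p l)) /\
  (forall l l', ile A l l' -> forall x, S x -> ibond l l' (p l' x) = p l x) /\
  (forall (P : normedModType K) (h : V -> P), dim_lt P k -> is_clin S h ->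
     exists l (g : ispace A l -> P), is_clin setT g /\
       forall x, S x -> h x = g (p l x)) /\
  (forall (P : normedModType K) l (g g' : ispace A l -> P), dim_lt P k ->
     is_clin setT g -> is_clin setT g' ->
     (forall x, S x -> g (p l x) = g' (p l x)) ->
     exists l', ile A l l' /\ forall y, g (ibond l l' y) = g' (ibond l l' y)).

(** S_{kappa^-}(e) is an isomorphism of Sh_{kappa^-}(N), where
    e : S -> V is the inclusion of the linear subspace S of V
    (with its induced norm): the unique pro-morphism e with
    e p = q e between expansions p of S and q of V is an isomorphism
    of pro-N_{kappa^-}. (Isomorphy does not depend on the chosen
    expansions.) *)
Definition shape_iso_inclusion (V : normedModType K) (S : set V)
  (Tk : Type) (k : set Tk) : Prop :=
  exists (A B : invsys) (p : forall l : isx A, V -> ispace A l)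
         (q : forall l : isx B, V -> ispace B l) (E : sysmor A B),
    inv_system A k /\ inv_system B k /\
    expansion S p k /\ expansion setT q k /\
    is_sysmor E /\
    (forall mu x, S x -> sfun E mu (p (smap E mu) x) = q mu x) /\
    pro_iso E.

End Shape.

(* Main.v *)
Require Import Defs.
From mathcomp Require Import all_boot all_order all_algebra.
From mathcomp Require Import all_classical all_reals all_analysis.
Import numFieldNormedType.Exports.
Import Order.TTheory GRing.Theory Num.Theory.
From mathcomp Require Import complex.
From mathcomp Require Import ring lra.
Local Open Scope classical_set_scope.
Local Open Scope ring_scope.
Section Gen.
Context {K : numFieldType}.
Context {V W : lmodType K}.
Implicit Types (S : set V) (h : V -> W).

Lemma lin0 {S h} : linear_on S h -> S 0 -> h 0 = 0.
Proof. by move=> H S0; have := H (-1) 0 0 S0 S0; rewrite scaler0 add0r scaleN1r addNr. Qed.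

Lemma linB {S h x y} : linear_on S h -> S x -> S y -> h (x - y) = h x - h y.
Proof. by move=> H Sx Sy; have := H (-1) y x Sy Sx; rewrite !scaleN1r addrC [_ + h x]addrC. Qed.

Lemma linZ {S h} a {x} : linear_on S h -> S 0 -> S x -> h (a *: x) = a *: h x.
Proof. by move=> H S0 Sx; have := H a x 0 Sx S0; rewrite !addr0 (lin0 H S0) addr0. Qed.

Lemma linD {S h x y} : linear_on S h -> S x -> S y -> h (x + y) = h x + h y.
Proof. by move=> H Sx Sy; have := H 1 x y Sx Sy; rewrite !scale1r. Qed.

Lemma subB {S x y} : lin_subspace S -> S x -> S y -> S (x - y).
Proof. by move=> [_ H] Sx Sy; have := H (-1) y x Sy Sx; rewrite scaleN1r addrC. Qed.

Lemma subZ {S} a {x} : lin_subspace S -> S x -> S (a *: x).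
Proof. by move=> [S0 H] Sx; have := H a x 0 Sx S0; rewrite addr0. Qed.

Lemma subD {S x y} : lin_subspace S -> S x -> S y -> S (x + y).
Proof. by move=> [_ H] Sx Sy; have := H 1 x y Sx Sy; rewrite scale1r. Qed.
End Gen.

Section Gen2.
Context {K : numFieldType}.
Context {V W : normedModType K}.
Implicit Types (S : set V) (h : V -> W).

Lemma bound_cont S h (C : K) :
  lin_subspace S -> linear_on S h -> 0 <= C -> (forall x, S x -> `|h x| <= C * `|x|) ->
  {within S, continuous h}.
Proof.
move=> HS Hl C0 Hb; apply/subspace_continuousP => x Sx.
apply/cvgrPdist_lt => e e0; rewrite /within; apply/nbhs_normP.
have C1 : 0 < C + 1 by rewrite ltr_wpDl.
exists (e / (C + 1)) => /=; first by rewrite divr_gt0.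
move=> t /= xt St.
rewrite -(linB Hl Sx St); apply: (le_lt_trans (Hb _ (subB HS Sx St))).
rewrite ltr_pdivlMr // in xt; apply: le_lt_trans xt.
by rewrite mulrC ler_wpM2l // lerDl.
Qed.

Lemma cont_bound S h :
  lin_subspace S -> linear_on S h -> {within S, continuous h} ->
  exists C : K, 0 < C /\ forall x, S x -> `|h x| <= C * `|x|.
Proof.
move=> HS Hl /subspace_continuousP /(_ 0 HS.1).
move=> /cvgrPdist_lt /(_ 1 ltr01); rewrite /within => /nbhs_normP [d d0 Hd].
exists (2 / d); split; first by rewrite divr_gt0.
move=> x Sx; have [->|x0] := eqVneq x 0.
  by rewrite (lin0 Hl HS.1) !normr0 mulr0.
have nx : 0 < `|x| by rewrite normr_gt0.
pose a := d / (2 * `|x|).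
have a0 : 0 < a by rewrite divr_gt0 // mulr_gt0.
have := Hd (a *: x); rewrite /= sub0r normrN normrZ gtr0_norm //.
have -> : a * `|x| = d / 2.
  by rewrite /a; field; rewrite gt_eqF.
have ltd : d / 2 < d by rewrite ltr_pdivrMr // ltr_pMr // ltr1n.
move=> /(_ ltd (subZ a HS Sx)) /=.
rewrite /from_subspace (lin0 Hl HS.1) sub0r normrN (linZ _ Hl HS.1 Sx) normrZ gtr0_norm // => H1.
have H2 : `|h x| < a^-1 by rewrite -ltr_pdivlMl // in H1; rewrite mulr1 in H1.
apply: ltW; apply: (lt_le_trans H2); rewrite /a invfM invrK.
by rewrite le_eqVlt; apply/orP; left; apply/eqP; field; rewrite gt_eqF.
Qed.
End Gen2.
Lemma clin_comp {K : numFieldType} {U V W : normedModType K} {g : V -> W} {f : U -> V} :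
  is_clin setT g -> is_clin setT f -> is_clin setT (g \o f).
Proof.
move=> [gl gc] [fl fc]; split.
  by move=> a x y _ _ /=; rewrite fl // gl.
have fc' : continuous f by apply/continuous_subspace_setT.
have gc' : continuous g by apply/continuous_subspace_setT.
apply: (proj1 (continuous_subspace_setT _)) => x.
exact: (continuous_comp (fc' x) (gc' (f x))).
Qed.

Lemma clin_zero {K : numFieldType} {V W : normedModType K} :
  is_clin setT (fun _ : V => (0 : W)).
Proof.
split; first by move=> a x y _ _; rewrite scaler0 addr0.
apply: (proj1 (continuous_subspace_setT _)) => x; exact: cvg_cst.
Qed.

Local Notation BD l l' := (@ibond _ _ l l').

Lemma shape_kill {K : numFieldType} (X : normedModType K) (S : set X)
  (Tk : Type) (k : set Tk) :
  shape_iso_inclusion S k ->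
  forall (P : normedModType K) (h : X -> P), dim_lt P k -> is_clin setT h ->
  (forall x, S x -> h x = 0) -> forall x, h x = 0.
Proof.
move=> [A [B [p [q [E [_ [_ [Ep [Eq [[Eclin _] [Ecomp [G [[_ Gmor] [_ GE]]]]]]]]]]]]]].
move=> P h dP hc h0 x.
have [_ [qcomp [qE1 _]]] := Eq.
have [_ [_ [_ pE2]]] := Ep.
have [mu [g [gc hg]]] := qE1 P h dP hc.
pose nu := smap E mu.
have [l [nul Hl]] : exists l, ile nu l /\ forall y, g (Defs.sfun (s:=E) (mu:=mu) (BD nu l y)) = 0.
  have Hc : forall y, S y -> g (Defs.sfun (s:=E) (mu:=mu) (p nu y)) = 0.
    by move=> y Sy /=; rewrite Ecomp // -hg // h0.
  have [l' [? ?]] := pE2 P nu (fun y => g (Defs.sfun (s:=E) (mu:=mu) y)) (fun _ => 0) dP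
    (clin_comp gc (Eclin mu)) clin_zero Hc.
  by exists l'.
have [m [m1 [m2 Hm]]] := GE mu.
have [m' [m'1 [m'2 Hm']]] := Gmor nu l nul.
rewrite hg // -(qcomp _ _ m2) //=.
have := Hm (q m x); rewrite /= => <-.
rewrite (qcomp _ _ m1) // -(qcomp _ _ m'1) // Hm' /=.
exact: Hl.
Qed.
Lemma dim_lt_scalar (K : numFieldType) (Tk : Type) (k : set Tk) :
  infinite_set k -> dim_lt (K^o : normedModType K) k.
Proof.
move=> kinf; exists [set (1 : K^o)]; split; [split|split].
- move=> s c us Hs Hsum v vs.
  have sE : s = [:: 1].
    case: s us Hs Hsum vs => [|a [|b s']] //= us Hs _ _.
    + by rewrite (Hs a); rewrite ?inE ?eqxx.
    + have ha := Hs a (mem_head _ _).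
      have hb : b = 1 by apply: Hs; rewrite !inE eqxx orbT.
      by move: us; rewrite ha hb /= inE eqxx.
  move: Hsum vs; rewrite sE big_cons big_nil addr0 inE => /eqP.
  by move=> /eqP; rewrite -[(c 1)%:A]/(c 1 * 1) mulr1 => ? /eqP ->.
- move=> x; exists [:: 1], (fun _ => x); split; first by move=> v; rewrite inE => /eqP ->.
  by rewrite big_cons big_nil addr0 -[x *: 1]/(x * 1) mulr1.
- apply: (card_le_trans (B := `I_1)); first by have /card_eqPle[] := @card_set1 _ (1 : K^o).
  apply: (card_le_trans (B := [set: nat])); first exact: card_leT.
  exact/infiniteP.
- move=> H; apply: kinf; apply: (card_le_finite H); exact: finite_set1.
Qed.
Section HahnBanach.
Context {R : realType} {F : numFieldType} (io : {rmorphism R -> F}) {X : lmodType F}.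
Variable p : X -> R.
Hypothesis psub : forall x y, p (x + y) <= p x + p y.
Hypothesis phom : forall s x, 0 < s -> p (io s *: x) = s * p x.

Definition valid (G : set (X * R)) :=
  [/\ (forall x a b, G (x, a) -> G (x, b) -> a = b),
      (forall r x y a b, G (x, a) -> G (y, b) -> G (io r *: x + y, r * a + b)) &
      (forall x a, G (x, a) -> a <= p x)].

Lemma valid_scale {G} r {x a} : valid G -> G (0, 0) -> G (x, a) -> G (io r *: x, r * a).
Proof. by move=> [_ Hl _] G0 Gx; have := Hl r x 0 a 0 Gx G0; rewrite !addr0. Qed.

Lemma valid_sub {G x y a b} : valid G -> G (x, a) -> G (y, b) -> G (y - x, b - a).
Proof.
move=> [_ Hl _] Gx Gy; have := Hl (-1) x y a b Gx Gy.
by rewrite rmorphN1 scaleN1r mulN1r addrC [-a + b]addrC.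
Qed.

Lemma valid_add {G x y a b} : valid G -> G (x, a) -> G (y, b) -> G (x + y, a + b).
Proof.
move=> [_ Hl _] Gx Gy; have := Hl 1 x y a b Gx Gy.
by rewrite rmorph1 scale1r mul1r.
Qed.

Lemma ext_step H x1 : valid H -> H (0, 0) -> ~ (exists a, H (x1, a)) ->
  exists H', [/\ valid H', H `<=` H' & exists al, H' (x1, al)].
Proof.
move=> vH H00 nx1; have [Hf Hl Hd] := vH.
pose S := [set t | exists y a, H (y, a) /\ t = a - p (y - x1)].
have key : forall y1 a1 y2 a2, H (y1, a1) -> H (y2, a2) ->
    a1 - p (y1 - x1) <= p (y2 + x1) - a2.
  move=> y1 a1 y2 a2 H1 H2.
  have := Hd _ _ (valid_add vH H1 H2).
  have := psub (y1 - x1) (y2 + x1).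
  have -> : y1 - x1 + (y2 + x1) = y1 + y2.
    by rewrite [y2 + x1]addrC addrA subrK.
  lra.
have Sne : S !=set0 by exists (0 - p (0 - x1)), 0, 0.
have Sub : has_ubound S.
  exists (p (0 + x1) - 0) => t [y [a [Hy ->]]]; exact: key.
pose al := sup S.
have al_ge : forall y a, H (y, a) -> a - p (y - x1) <= al.
  by move=> y a Hy; apply: ub_le_sup => //; exists y, a.
have al_le : forall y a, H (y, a) -> al <= p (y + x1) - a.
  by move=> y a Hy; apply: ge_sup => // t [y' [a' [Hy' ->]]]; exact: key.
pose H' := [set w | exists y a t, H (y, a) /\ w = (y + io t *: x1, a + t * al)].
exists H'; split.
- split.
  + move=> x a b [y [a' [t [Hy [-> ->]]]]] [y' [b' [t' [Hy' []]]]].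
    move=> E1 ->.
    have [tt|tt'] := eqVneq t t'.
      subst t'; move/addIr: E1 => yy; rewrite yy in Hy.
      by rewrite (Hf _ _ _ Hy Hy').
    exfalso; apply: nx1; exists ((t - t')^-1 * (b' - a')).
    have := valid_scale ((t - t')^-1) vH H00 (valid_sub vH Hy Hy').
    have -> : y' - y = io (t - t') *: x1.
      have -> : y' = y + io t *: x1 - io t' *: x1 by rewrite E1 addrK.
      by rewrite rmorphB scalerBl addrAC [y + _]addrC addrK.
    by rewrite scalerA -rmorphM mulVf ?subr_eq0 // rmorph1 scale1r.
  + move=> r x y a b [y1 [a1 [t1 [H1 [-> ->]]]]] [y2 [a2 [t2 [H2 [-> ->]]]]].
    exists (io r *: y1 + y2), (r * a1 + a2), (r * t1 + t2); split; first exact: Hl.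
    congr (_, _); last by ring.
    by rewrite rmorphD rmorphM scalerDl scalerDr scalerA !addrA; congr (_ + _); rewrite addrAC.
  + move=> x a [y [a' [t [Hy [-> ->]]]]].
    have [t0|t0|->] := ltgtP t 0; last first.
    + by rewrite mul0r addr0 rmorph0 scale0r addr0; exact: Hd.
    + have Hy2 := valid_scale t^-1 vH H00 Hy.
      have h1 := al_le _ _ Hy2.
      have := @phom t (io t^-1 *: y + x1) t0.
      rewrite scalerDr scalerA -rmorphM mulfV ?gt_eqF // rmorph1 scale1r => ->.
      have h2 : t * al <= t * (p (io t^-1 *: y + x1) - t^-1 * a') by rewrite ler_wpM2l // ltW.
      rewrite mulrBr mulrA mulfV ?gt_eqF // mul1r in h2.
      lra.
    + pose s := - t; have s0 : 0 < s by rewrite /s oppr_gt0.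
      have Hy2 := valid_scale s^-1 vH H00 Hy.
      have h1 := al_ge _ _ Hy2.
      have := @phom s (io s^-1 *: y - x1) s0.
      rewrite scalerDr scalerA -rmorphM mulfV ?gt_eqF // rmorph1 scale1r.
      rewrite scalerN /s rmorphN scaleNr opprK => ->.
      have h2 : s * (s^-1 * a' - p (io s^-1 *: y - x1)) <= s * al by rewrite ler_wpM2l // ltW.
      rewrite mulrBr mulrA mulfV ?gt_eqF // mul1r /s in h2.
      lra.
- move=> [y a] Hy; exists y, a, 0; split => //.
  by rewrite rmorph0 scale0r addr0 mul0r addr0.
- exists al, 0, 0, 1; split => //.
  by rewrite rmorph1 scale1r add0r mul1r add0r.
Qed.

Lemma hahn_banach G0 : valid G0 -> G0 (0, 0) ->
  exists u : X -> R, [/\ (forall r x y, u (io r *: x + y) = r * u x + u y),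
    (forall x, u x <= p x) & (forall x a, G0 (x, a) -> u x = a)].
Proof.
move=> vG0 G00.
pose P := fun G : set (X * R) => valid (G `|` G0).
have [A [PA Amax]] : exists A, P A /\ forall B, A `<` B -> ~ P B.
  apply: Zorn_bigcup => Fm FP Ftot.
  pose U := \bigcup_(G in Fm) G `|` G0.
  have two : forall w1 w2, U w1 -> U w2 ->
      exists Hh, [/\ valid Hh, Hh `<=` U, Hh w1 & Hh w2].
    have sub1 : forall G, Fm G -> G `|` G0 `<=` U.
      by move=> G FG w [Gw|G0w]; [left; exists G|right].
    move=> w1 w2 [[G1 FG1 G1w]|G0w1] [[G2 FG2 G2w]|G0w2].
    - have [G12|G21] := Ftot _ _ FG1 FG2.
      + exists (G2 `|` G0); split; [exact: FP|exact: sub1|left; exact: G12|by left].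
      + exists (G1 `|` G0); split; [exact: FP|exact: sub1|by left|left; exact: G21].
    - by exists (G1 `|` G0); split; [exact: FP|exact: sub1|left|right].
    - by exists (G2 `|` G0); split; [exact: FP|exact: sub1|right|left].
    - by exists G0; split => //; move=> w ?; right.
  split.
  - move=> x a b Ua Ub; have [Hh [[Hf _ _] _ H1 H2]] := two _ _ Ua Ub; exact: Hf H1 H2.
  - move=> r x y a b Ua Ub; have [Hh [[_ Hl _] sub H1 H2]] := two _ _ Ua Ub.
    exact/sub/Hl.
  - move=> x a Ua; have [Hh [[_ _ Hd] _ H1 _]] := two _ _ Ua Ua; exact: Hd H1.
pose H := A `|` G0.
have vH : valid H := PA.
have H00 : H (0, 0) by right.
have tot : forall x, exists a, H (x, a).
  move=> x1; apply: contrapT => nx1.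
  have [H' [vH' HH' [al H'x1]]] := @ext_step H x1 vH H00 nx1.
  apply: (Amax H').
    split; first by move=> w Aw; apply: HH'; left.
    move=> H'A; apply: nx1; exists al; left; exact: H'A.
  rewrite /P setUidl //.
  by move=> w G0w; apply: HH'; right.
have [u Hu] := choice tot.
have [Hf Hl Hd] := vH.
exists u; split.
- by move=> r x y; apply: (Hf _ _ _ (Hu _)); apply: Hl.
- by move=> x; apply: Hd.
- by move=> x a G0x; apply: (Hf _ _ _ (Hu _)); right.
Qed.
End HahnBanach.
Section Sep.
Context {R : realType} {F : numFieldType} (io : {rmorphism R -> F}) (rho : F -> R).
Hypothesis iorho : forall c : F, c \is Num.real -> io (rho c) = c.
Hypothesis ler_io : forall a b : R, (io a <= io b) = (a <= b).

Lemma io_inj : injective io.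
Proof. by move=> a b e; apply/eqP; rewrite eq_le -!ler_io e lexx. Qed.

Lemma io_real r : io r \is Num.real.
Proof.
have [r0|r0] := lerP 0 r.
  by apply/ger0_real; rewrite -(rmorph0 io) ler_io.
by apply/ler0_real; rewrite -(rmorph0 io) ler_io ltW.
Qed.

Lemma rhoio r : rho (io r) = r.
Proof. by apply: io_inj; apply: iorho; apply: io_real. Qed.

Lemma ltr_io a b : (io a < io b) = (a < b).
Proof. by rewrite !lt_def ler_io (inj_eq io_inj). Qed.

Lemma io_norm r : `|io r| = io `|r|.
Proof.
have [r0|r0] := lerP 0 r.
  by rewrite !ger0_norm // -(rmorph0 io) ler_io.
by rewrite !ltr0_norm ?rmorphN // -(rmorph0 io) ltr_io.
Qed.



Lemma sep_generic (X : normedModType F) (Z : set X) (x0 : X) :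
  lin_subspace Z -> ~ closure Z x0 ->
  exists u : X -> R, [/\ (forall r x y, u (io r *: x + y) = r * u x + u y),
    (forall z, Z z -> u z = 0), u x0 = 1 &
    exists M : F, 0 <= M /\ forall x, `|io (u x)| <= M * `|x|].
Proof.
move=> HZ ncl.
have [d d0 Hd] : exists2 d : F, 0 < d & forall z, Z z -> d <= `|x0 - z|.
  move: ncl; rewrite /closure /= => /existsNP [B /not_implyP [nB nZB]].
  move/nbhs_normP: nB => [e e0 Be].
  exists e => // z Zz; rewrite (real_leNgt (gtr0_real e0) (normr_real _)).
  apply/negP => ez; apply: nZB; exists z; split => //; exact: Be.
pose dr := rho d.
have d_real : d \is Num.real by rewrite gtr0_real.
have dr0 : 0 < dr.
  by rewrite /dr -ltr_io rmorph0 (iorho d d_real).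
pose p (x : X) := rho `|x| / dr.
have iop : forall x : X, io (rho `|x|) = `|x|.
  by move=> x; apply: iorho; exact: normr_real.
have psub : forall x y : X, p (x + y) <= p x + p y.
  move=> x y; rewrite /p -mulrDl ler_pM2r ?invr_gt0 //.
  by rewrite -ler_io rmorphD !iop ler_normD.
have phom : forall s (x : X), 0 < s -> p (io s *: x) = s * p x.
  move=> s x s0; rewrite /p mulrA; congr (_ / _); apply: io_inj.
  rewrite iop rmorphM iop normrZ io_norm gtr0_norm //.
have x0Z : ~ Z x0 by move=> Zx0; apply: ncl; exact: subset_closure.
pose G0 := [set w | exists z t, Z z /\ w = (z + io t *: x0, t)].
have G00 : G0 (0, 0) by exists 0, 0; rewrite rmorph0 scale0r addr0; split => //; exact: HZ.1.
have vG0 : valid io p G0.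
  split.
  - move=> x a b [z [t [Zz [-> ->]]]] [z' [t' [Zz' []]]] E1 ->.
    have [//|tt'] := eqVneq t t'; exfalso; apply: x0Z.
    have -> : x0 = io (t - t')^-1 *: (z' - z).
      have -> : z' = z + io t *: x0 - io t' *: x0 by rewrite E1 addrK.
      rewrite addrAC [z + _]addrC addrK -scalerBl -rmorphB.
      by rewrite scalerA -rmorphM mulVf ?subr_eq0 // rmorph1 scale1r.
    by apply: subZ => //; apply: subB.
  - move=> r x y a b [z [t [Zz [-> ->]]]] [z' [t' [Zz' [-> ->]]]].
    exists (io r *: z + z'), (r * t + t'); split; first by apply: (HZ.2).
    congr (_, _).
    by rewrite rmorphD rmorphM scalerDl scalerDr scalerA !addrA; congr (_ + _); rewrite addrAC.
  - move=> x a [z [t [Zz [-> ->]]]].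
    rewrite /p ler_pdivlMr // -ler_io rmorphM iop /dr iorho //.
    have [->|t0] := eqVneq t 0; first by rewrite rmorph0 mul0r.
    have it0 : io t != 0 by rewrite -(rmorph0 io) (inj_eq io_inj).
    apply: (le_trans (y := `|io t| * d)).
      by apply: ler_wpM2r; [exact: ltW | exact: real_ler_norm (io_real t)].
    have := Hd _ (subZ (- (io t)^-1) HZ Zz).
    move=> Hz; apply: le_trans (ler_wpM2l (normr_ge0 (io t)) Hz) _.
    rewrite -normrZ scalerBr scaleNr scalerN opprK scalerA mulfV // scale1r addrC.
    done.
have [u [ulin ule uext]] := @hahn_banach R F io X p psub phom G0 vG0 G00.
exists u; split => //.
- move=> z Zz; apply: (uext z 0); exists z, 0; split => //.
  by rewrite rmorph0 scale0r addr0.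
- apply: (uext x0 1); exists 0, 1; split; first exact: HZ.1.
  by rewrite rmorph1 scale1r add0r.
- exists (d^-1); split; first by rewrite invr_ge0 ltW.
  move=> x; rewrite io_norm.
  have u0 : u 0 = 0.
    have := ulin 1 0 0; rewrite scaler0 addr0 mul1r => /eqP.
    by rewrite -{1}[u 0]addr0 (inj_eq (addrI _)) eq_sym => /eqP.
  have uN : u (- x) = - u x by have := ulin (-1) x 0; rewrite addr0 u0 addr0 rmorphN1 scaleN1r mulN1r.
  have pN : p (- x) = p x by rewrite /p normrN.
  have : `|u x| <= p x.
    by rewrite ler_norml ule andbT lerNl -uN -pN ule.
  rewrite -ler_io => /le_trans; apply.
  rewrite /p rmorphM iop mulrC; apply: ler_wpM2r; first exact: normr_ge0.
  by rewrite rmorphV ?unitfE ?gt_eqF // /dr iorho.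
Qed.
End Sep.
Section Ext.
Context {F : numFieldType} {X : normedModType F}.

Lemma zero_on_closure (P : normedModType F) (Z : set X) (h : X -> P) :
  is_clin setT h -> (forall z, Z z -> h z = 0) -> forall x, closure Z x -> h x = 0.
Proof.
move=> [_ hc] h0 x clx; apply/eqP; apply: contrapT => /negP hx.
have hc' : continuous h by apply/continuous_subspace_setT.
have := hc' x; move/cvgrPdist_lt => /(_ (`|h x|)).
rewrite normr_gt0 => /(_ hx) nB.
have [z [Zz /=]] := clx _ nB.
by rewrite (h0 z Zz) subr0 ltxx.
Qed.

Lemma dense_pt {Z : set X} {x} {e : F} : closure Z x -> 0 < e ->
  exists z, Z z /\ `|x - z| < e.
Proof.
move=> clx e0.
have : nbhs x [set z | `|x - z| < e] by apply/nbhs_normP; exists e.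
by move=> /clx [z [Zz /= xz]]; exists z.
Qed.

Lemma small_zero (V : normedModType F) (a : V) (K : F) : 0 < K -> (forall e, 0 < e -> `|a| <= K * e) -> a = 0.
Proof.
move=> K0 H; apply/normr0_eq0/eqP; rewrite eq_le normr_ge0 andbT.
apply/ler_addgt0Pr => e e0; rewrite add0r.
have := H (e / K) (divr_gt0 e0 K0).
by rewrite mulrC divfK ?gt_eqF.
Qed.

Lemma ext_point (Y : completeNormedModType F) (Z : set X) (f : X -> Y) (C : F) x :
  lin_subspace Z -> linear_on Z f -> 0 < C ->
  (forall z, Z z -> `|f z| <= C * `|z|) -> closure Z x ->
  exists y, forall z, Z z -> `|y - f z| <= C * `|x - z|.
Proof.
move=> HZ fl C0 fb clx.
have PF : ProperFilter (within Z (nbhs x)) := @within_nbhs_proper _ Z x clx.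
have fdiff : forall z1 z2, Z z1 -> Z z2 -> `|f z1 - f z2| <= C * `|z1 - z2|.
  by move=> z1 z2 Z1 Z2; rewrite -(linB fl Z1 Z2); apply: fb; apply: subB.
have cG : cauchy (f @ within Z (nbhs x)).
  apply: cauchy_exP => eps eps0.
  have d0 : 0 < eps / (2 * C) by rewrite divr_gt0 // mulr_gt0.
  have [z0 [Zz0 xz0]] := dense_pt clx d0.
  exists (f z0); rewrite /= /within; apply/nbhs_normP.
  exists (eps / (2 * C)) => //= z xz Zz.
  rewrite -ball_normE /=.
  apply: (le_lt_trans (fdiff _ _ Zz0 Zz)).
  have : `|z0 - z| < 2 * (eps / (2 * C)).
    apply: (le_lt_trans (y := `|z0 - x| + `|x - z|)).
      exact: ler_distD.
    by rewrite mulr2n mulrDl mul1r ltrD // distrC.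
  rewrite -ltr_pdivlMl // => /lt_le_trans; apply.
  by rewrite le_eqVlt; apply/orP; left; apply/eqP; field; rewrite gt_eqF.
have PG : ProperFilter (f @ within Z (nbhs x)) := fmap_proper_filter f PF.
have cv := @cauchy_cvg Y _ PG cG.
exists (lim (f @ within Z (nbhs x))) => z Zz.
set y := lim _ in cv *.
apply/ler_addgt0Pr => e e0.
have e2 : 0 < e / 2 by rewrite divr_gt0.
have e2C : 0 < e / (2 * C) by rewrite divr_gt0 // mulr_gt0.
have Q1 : within Z (nbhs x) [set t | `|y - f t| < e / 2].
  by move: cv => /cvgrPdist_lt /(_ _ e2).
have Q2 : within Z (nbhs x) Z by apply: withinT.
have Q3 : within Z (nbhs x) [set t | `|x - t| < e / (2 * C)].
  rewrite /within; apply/nbhs_normP; exists (e / (2 * C)) => //= t xt _; exact: xt.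
have [t [[H1 Zt] H3]] := filter_ex (filterI (filterI Q1 Q2) Q3).
apply: (le_trans (ler_distD (f t) _ _)).
have h2 := fdiff _ _ Zt Zz.
have h3 : `|t - z| <= `|x - t| + `|x - z| by rewrite (distrC x t); exact: ler_distD.
have h4 : C * `|x - t| <= e / 2.
  apply: ltW; rewrite -ltr_pdivlMl //; apply: (lt_le_trans H3).
  by rewrite le_eqVlt; apply/orP; left; apply/eqP; field; rewrite gt_eqF.
have h5 : C * `|t - z| <= C * `|x - t| + C * `|x - z| by rewrite -mulrDr ler_wpM2l // ltW.
have : `|y - f t| + `|f t - f z| <= e / 2 + (e / 2 + C * `|x - z|).
  apply: lerD; first exact: ltW.
  apply: (le_trans h2); apply: (le_trans h5); rewrite lerD2r; exact: h4.
move/le_trans; apply.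
by rewrite addrA -splitr addrC.
Qed.
End Ext.
Section Main.
Context {R : realType} {F : numFieldType} (io : {rmorphism R -> F}) (rho : F -> R).
Hypothesis iorho : forall c : F, c \is Num.real -> io (rho c) = c.
Hypothesis ler_io : forall a b : R, (io a <= io b) = (a <= b).

Lemma opnorm_exists (V W : normedModType F) (S : set V) (h : V -> W) (C : F) :
  0 <= C -> (forall x, S x -> `|h x| <= C * `|x|) -> exists c, is_opnorm S h c.
Proof.
move=> C0 hb.
have ion : forall (v : V), io (rho `|v|) = `|v| by move=> v; apply: iorho; exact: normr_real.
have ionW : forall (v : W), io (rho `|v|) = `|v| by move=> v; apply: iorho; exact: normr_real.
have nz : forall v : V, v != 0 -> 0 < rho `|v|.
  by move=> v v0; rewrite -(ltr_io io ler_io) rmorph0 ion normr_gt0.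
have rat : forall (x : V) (b : F), 0 <= b -> x != 0 ->
    (rho `|h x| / rho `|x| <= rho b) = (`|h x| <= b * `|x|).
  move=> x b b0 x0; rewrite ler_pdivrMr ?nz // -ler_io rmorphM ion ionW.
  by rewrite iorho // ger0_real.
pose T := [set r : R | r = 0 \/ exists2 x, S x & x != 0 /\ r = rho `|h x| / rho `|x|].
have T0 : T 0 by left.
have Tub : forall b : F, 0 <= b -> (forall x, S x -> `|h x| <= b * `|x|) -> ubound T (rho b).
  move=> b b0 hbb r [->|[x Sx [x0 ->]]].
    by rewrite -ler_io rmorph0 iorho // ger0_real.
  by rewrite rat // hbb.
have hasub : has_ubound T by exists (rho C); exact: Tub.
exists (io (sup T)); split; [|split].
- by rewrite -(rmorph0 io) ler_io; apply: ub_le_sup.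
- move=> x Sx; have [ex|x0] := eqVneq x 0.
    by move: (hb x Sx); rewrite ex !normr0 !mulr0.
  have : rho `|h x| / rho `|x| <= sup T by apply: ub_le_sup => //; right; exists x.
  rewrite ler_pdivrMr ?nz // -ler_io rmorphM ion ionW //.
- move=> c' c0 hc'; rewrite -[c' in _ <= c']iorho ?ger0_real // ler_io.
  by apply: ge_sup; [exists 0|exact: Tub].
Qed.

Lemma lin_setT (V : lmodType F) : lin_subspace (@setT V).
Proof. by split. Qed.

Lemma main_gen (Tk : Type) (k : set Tk) (Hk : infinite_set k)
  (X : normedModType F) (Z : set X) (HZ : lin_subspace Z)
  (Hsep : forall x0, ~ closure Z x0 -> exists phi : X -> F^o,
     is_clin setT phi /\ (forall z, Z z -> phi z = 0) /\ phi x0 != 0)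
  (Hshape : shape_iso_inclusion (closure Z) k) :
  forall (Y : completeNormedModType F), dim_lt Y k ->
  forall f : X -> Y, is_clin Z f ->
  exists fb : X -> Y,
    is_clin setT fb /\ (forall z, Z z -> fb z = f z) /\
    exists c : F, is_opnorm Z f c /\ is_opnorm setT fb c.
Proof.
have dense : forall x, closure Z x.
  move=> x0; apply: contrapT => ncl.
  have [phi [phic [phi0 phix]]] := Hsep x0 ncl.
  have := @shape_kill _ X (closure Z) Tk k Hshape (F^o) phi (dim_lt_scalar F Tk k Hk) phic
    (zero_on_closure _ _ _ phic phi0) x0.
  by move/eqP; rewrite (negbTE phix).
move=> Y dY f [fl fc].
have [C [C0 Cb]] := cont_bound _ _ HZ fl fc.
have [c [c0 [cb cmin]]] := @opnorm_exists _ _ _ _ _ (ltW C0) Cb.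
have ex : forall x, exists y, forall z, Z z -> `|y - f z| <= C * `|x - z|.
  by move=> x; exact: (ext_point _ _ _ _ _ HZ fl C0 Cb (dense x)).
have [fb Hfb] := choice ex.
have fbZ : forall z, Z z -> fb z = f z.
  move=> z Zz; apply/eqP; rewrite -subr_eq0 -normr_le0.
  by have := Hfb z z Zz; rewrite subrr normr0 mulr0.
have fblin : forall a x y, fb (a *: x + y) = a *: fb x + fb y.
  move=> a x y; apply/eqP; rewrite -subr_eq0; apply/eqP.
  have K0 : 0 < 2 * C * (`|a| + 1) by rewrite !mulr_gt0 // ltr_pwDr.
  apply: (small_zero _ _ _ K0) => e e0.
  have [z1 [Z1 xz1]] := dense_pt (dense x) e0.
  have [z2 [Z2 yz2]] := dense_pt (dense y) e0.
  have Z12 : Z (a *: z1 + z2) by apply: HZ.2.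
  have E : fb (a *: x + y) - (a *: fb x + fb y) =
      (fb (a *: x + y) - f (a *: z1 + z2)) + (a *: (f z1 - fb x) + (f z2 - fb y)).
    rewrite (fl a z1 z2 Z1 Z2) scalerBr.
    by rewrite (addrACA (a *: f z1)) -opprD addrA subrK.
  rewrite E; apply: (le_trans (ler_normD _ _)).
  have h1 := Hfb (a *: x + y) _ Z12.
  have h2 := Hfb x _ Z1.
  have h3 := Hfb y _ Z2.
  have h4 : `|a *: x + y - (a *: z1 + z2)| <= `|a| * `|x - z1| + `|y - z2|.
    have -> : a *: x + y - (a *: z1 + z2) = a *: (x - z1) + (y - z2).
      by rewrite scalerBr opprD !addrA; congr (_ + _); rewrite addrAC.
    by apply: (le_trans (ler_normD _ _)); rewrite normrZ.
  have h5 : `|a *: (f z1 - fb x) + (f z2 - fb y)| <= `|a| * (C * `|x - z1|) + C * `|y - z2|.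
    apply: (le_trans (ler_normD _ _)); rewrite normrZ; apply: lerD.
      by apply: ler_wpM2l => //; rewrite distrC.
    by rewrite distrC.
  have ax : `|a| * `|x - z1| <= `|a| * e by apply: ler_wpM2l => //; exact: ltW.
  have yz : `|y - z2| <= e by exact: ltW.
  have : `|a| * `|x - z1| + `|y - z2| <= (`|a| + 1) * e.
    by rewrite mulrDl mul1r; apply: lerD.
  move=> h6.
  apply: (le_trans (lerD h1 h5)).
  have -> : 2 * C * (`|a| + 1) * e = C * ((`|a| + 1) * e) + C * ((`|a| + 1) * e) by ring.
  have -> : `|a| * (C * `|x - z1|) + C * `|y - z2| = C * (`|a| * `|x - z1| + `|y - z2|) by ring.
  apply: lerD; first by apply: ler_wpM2l; [exact: ltW|exact: le_trans h4 h6].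
  by apply: ler_wpM2l; [exact: ltW|exact: h6].
have fbb : forall x, `|fb x| <= c * `|x|.
  move=> x; apply/ler_addgt0Pr => e e0.
  have Cc : 0 < C + c by rewrite ltr_pwDl.
  have [z [Zz xz]] := dense_pt (dense x) (divr_gt0 e0 Cc).
  have h1 := Hfb x z Zz.
  have h2 := cb z Zz.
  have h3 : `|z| <= `|x| + `|x - z|.
    by have := ler_normD x (z - x); rewrite addrC subrK distrC.
  have : `|fb x| <= C * `|x - z| + c * (`|x| + `|x - z|).
    rewrite -[fb x](subrK (f z)); apply: (le_trans (ler_normD _ _)); apply: lerD => //.
    by apply: (le_trans h2); apply: ler_wpM2l.
  move/le_trans; apply.
  have -> : C * `|x - z| + c * (`|x| + `|x - z|) = c * `|x| + (C + c) * `|x - z| by ring.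
  rewrite lerD2l mulrC -ler_pdivlMr //; exact: ltW.
exists fb; split; [split|split].
- by move=> a x y _ _; exact: fblin.
- by apply: (bound_cont _ _ c (lin_setT X)) => // a x y _ _; exact: fblin.
- exact: fbZ.
- exists c; split; first by split.
  split => //; split => // c' c'0 hc'; apply: cmin => // z Zz.
  by rewrite -fbZ //; apply: hc'.
Qed.
End Main.

Lemma real_case (R : realType) (Tk : Type) (k : set Tk) (Hk : infinite_set k)
  (X : normedModType (R : numFieldType)) (Z : set X) (HZ : lin_subspace Z)
  (Hshape : shape_iso_inclusion (closure Z) k) :
  forall (Y : completeNormedModType (R : numFieldType)), dim_lt Y k ->
  forall f : X -> Y, is_clin Z f ->
  exists fb : X -> Y,
    is_clin setT fb /\ (forall z, Z z -> fb z = f z) /\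
    exists c : (R : numFieldType), is_opnorm Z f c /\ is_opnorm setT fb c.
Proof.
pose io : {rmorphism R -> (R : numFieldType)} := idfun.
have iorho : forall c : (R : numFieldType), c \is Num.real -> io (id c) = c by [].
have ler_io : forall a b : R, (io a <= io b) = (a <= b) by [].
apply: (@main_gen R _ io id iorho ler_io Tk k Hk X Z HZ _ Hshape).
move=> x0 ncl.
have [u [ulin uZ ux0 [M [M0 uM]]]] := sep_generic io id iorho ler_io X Z x0 HZ ncl.
exists (u : X -> (R : numFieldType)^o); split; [split|split].
- by move=> a x y _ _; exact: ulin.
- apply: (bound_cont _ _ M (lin_setT X)) => //; first by move=> a x y _ _; exact: ulin.
  by move=> x _; exact: uM.
- exact: uZ.
- by rewrite ux0 oner_neq0.
Qed.

Lemma complex_case (R : realType) (Tk : Type) (k : set Tk) (Hk : infinite_set k)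
  (X : normedModType (R[i] : numFieldType)) (Z : set X) (HZ : lin_subspace Z)
  (Hshape : shape_iso_inclusion (closure Z) k) :
  forall (Y : completeNormedModType (R[i] : numFieldType)), dim_lt Y k ->
  forall f : X -> Y, is_clin Z f ->
  exists fb : X -> Y,
    is_clin setT fb /\ (forall z, Z z -> fb z = f z) /\
    exists c : (R[i] : numFieldType), is_opnorm Z f c /\ is_opnorm setT fb c.
Proof.
pose io : {rmorphism R -> (R[i] : numFieldType)} := real_complex R.
pose rho := fun c : (R[i] : numFieldType) => complex.Re c.
have iorho : forall c : (R[i] : numFieldType), c \is Num.real -> io (rho c) = c.
  move=> [a b]; rewrite realE !lecE /= => /orP[/andP[/eqP b0 _]|/andP[/eqP b0 _]].
    by rewrite /io /rho /= b0.
  by rewrite /io /rho /= -b0.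
have ler_io : forall a b : R, (io a <= io b) = (a <= b) by move=> a b; exact: lecR.
apply: (@main_gen R _ io rho iorho ler_io Tk k Hk X Z HZ _ Hshape).
move=> x0 ncl.
have [u [ulin uZ ux0 [M [M0 uM]]]] := sep_generic io rho iorho ler_io X Z x0 HZ ncl.
pose I : (R[i] : numFieldType) := 'i%C.
have II : I * I = -1 by rewrite -expr2 sqr_i.
pose phi := fun x : X => io (u x) - I * io (u (I *: x)).
have u0 : u 0 = 0.
  have := ulin 1 0 0; rewrite scaler0 addr0 mul1r => /eqP.
  by rewrite -{1}[u 0]addr0 (inj_eq (addrI _)) eq_sym => /eqP.
have uD : forall x y, u (x + y) = u x + u y.
  by move=> x y; have := ulin 1 x y; rewrite rmorph1 scale1r mul1r.
have uZr : forall r x, u (io r *: x) = r * u x.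
  by move=> r x; have := ulin r x 0; rewrite !addr0 u0 addr0.
have uN : forall x, u (- x) = - u x.
  by move=> x; have := uZr (-1) x; rewrite rmorphN1 scaleN1r mulN1r.
have phiD : forall x y, phi (x + y) = phi x + phi y.
  move=> x y; rewrite /phi scalerDr !uD !rmorphD mulrDr opprD.
  by rewrite addrACA.
have phiR : forall r x, phi (io r *: x) = io r * phi x.
  move=> r x; have e : I *: (io r *: x) = io r *: (I *: x) by rewrite !scalerA mulrC.
  by rewrite /phi e !uZr !rmorphM mulrBr mulrCA.
have phiI : forall x, phi (I *: x) = I * phi x.
  move=> x; rewrite /phi scalerA II scaleN1r uN rmorphN mulrN opprK.
  by rewrite mulrBr mulrA II mulN1r opprK addrC.
have aE : forall a : (R[i] : numFieldType), a = io (rho a) + I * io (Im a).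
  by move=> [a b]; rewrite /io /rho /I /=; apply/eqP; rewrite eq_complex /= !mul0r !mul1r !subr0 !add0r !addr0 !eqxx.
have phiZ : forall a x, phi (a *: x) = a * phi x.
  move=> a x; rewrite {1}(aE a) scalerDl phiD phiR [I * _]mulrC -scalerA phiR phiI.
  by rewrite [in RHS](aE a) mulrDl; congr (_ + _); rewrite mulrA [io (Im a) * I]mulrC.
exists (phi : X -> (R[i] : numFieldType)^o); split; [split|split].
- by move=> a x y _ _; rewrite phiD phiZ.
- apply: (bound_cont _ _ (M + `|I| * (M * `|I|)) (lin_setT X)).
  + by move=> a x y _ _; rewrite phiD phiZ.
  + by rewrite addr_ge0 // mulr_ge0 // mulr_ge0.
  + move=> x _; rewrite /phi; apply: (le_trans (ler_normB _ _)).
    rewrite mulrDl; apply: lerD; first exact: uM.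
    rewrite normrM -mulrA; apply: ler_wpM2l => //.
    by apply: (le_trans (uM _)); rewrite normrZ mulrA.
- move=> z Zz; rewrite /phi uZ // (uZ (I *: z)); last exact: subZ.
  by rewrite rmorph0 mulr0 subr0.
- rewrite /phi ux0 rmorph1; apply/negP => /eqP.
  rewrite /I /io /=; set b := u _.
  move/(congr1 (@complex.Re R)) => /=.
  by rewrite mul0r mulr0 subrr subr0 => /eqP; rewrite oner_eq0.
Qed.

Theorem theorem3 (R : realType) (F : numFieldType)
  (HF : F = (R : numFieldType) \/ F = (R[i] : numFieldType))
  (Tk : Type) (k : set Tk) (Hk : infinite_set k)
  (X : normedModType F) (HX : dim_ge X k)
  (Z : set X) (HZ : lin_subspace Z)
  (Hshape : shape_iso_inclusion (closure Z) k) :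
  forall (Y : completeNormedModType F), dim_lt Y k ->
  forall f : X -> Y, is_clin Z f ->
  exists fb : X -> Y,
    is_clin setT fb /\ (forall z, Z z -> fb z = f z) /\
    exists c : F, is_opnorm Z f c /\ is_opnorm setT fb c.
Proof.
case: HF => HF; subst F.
- exact: (real_case R Tk k Hk X Z HZ Hshape).
- exact: (complex_case R Tk k Hk X Z HZ Hshape).
Qed.
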